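(* Let $d,k\ge1$, let $\pi(a|s)$ be a policy on actions $a\in\{0,\dots,k-1\}$ and states $s\in\{1,\dots,d\}$, and let $M=(M^a)_a$ be nonnegative $d\times d$ matrices with $\sum_{s'}M^a_{ss'}=\pi(a|s)$ for all $a,s$ and with $M^+:=\sum_aM^a$ entrywise strictly positive. Define the linear map $A'$ on $\Delta\in\mathbb{R}^{d\times d}$ by $$A'(\Delta)=\Big(\big(L_a(\Delta)\big)_{a},\ \big(\textstyle\sum_{s'}M^a_{ss'}\Delta_{ss'}\big)_{a,s}\Big),$$ where $$L_a(\Delta)=(M^aM^+)\odot\big[M^+(M^+\odot\Delta)+(M^+\odot\Delta)M^+\big]-\big[(M^a\odot\Delta)M^+ + M^a(M^+\odot\Delta)\big]\odot (M^+)^2 .$$ If $A'$ has full rank $d^2$ (i.e. $A'(\Delta)=0$ implies $\Delta=0$), then there exists $\varepsilon>0$ such that every family $W=(W^a)_a$ of nonnegative $d\times d$ matrices with $\sum_{s'}W^a_{ss'}=\pi(a|s)$ for all $a,s$, with $W^+:=\sum_aW^a$ entrywise strictly positive, with $\max_{a,s,s'}|W^a_{ss'}-M^a_{ss'}|<\varepsilon$, and satisfying $$M^a\oslash M^+=W^a\oslash W^+\quad\text{and}\quad M^aM^+\oslash(M^+)^2=W^aW^+\oslash(W^+)^2\qquad\text{for all } a,$$ is equal to $M$.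
   Context: $\odot$ and $\oslash$ denote entrywise multiplication and division of matrices; juxtaposition and $(M^+)^2=M^+M^+$ denote ordinary matrix products. $M^a_{ss'}$ represents $\pi(a|s)p(s'|s,a)$; the two displayed equations say that $W$ and $M$ have the same one-step inverse model $p(a|s,s')$ and the same two-step first-action inverse model $p(a|s,s'')$. $L_a(\Delta)$ is the part linear in $\Delta$ of $M^aM^+\odot(W^+)^2-W^aW^+\odot(M^+)^2$ when $W^a=M^a\odot(1+\Delta)$. *)

(* Defs.v *)
From mathcomp Require Import all_boot all_order all_algebra.
From mathcomp Require Import reals.
Set Implicit Arguments. Unset Strict Implicit. Unset Printing Implicit Defensive.
Import Order.TTheory GRing.Theory Num.Theory.
Local Open Scope ring_scope.

Section Defs.
Variables (R : realType) (d k : nat).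

Definition emul (A B : 'M[R]_d) : 'M[R]_d := \matrix_(i, j) (A i j * B i j).
Definition ediv (A B : 'M[R]_d) : 'M[R]_d := \matrix_(i, j) (A i j / B i j).

Definition Mplus (M : 'I_k -> 'M[R]_d) : 'M[R]_d := \sum_(a < k) M a.

Definition La (M : 'I_k -> 'M[R]_d) (a : 'I_k) (D : 'M[R]_d) : 'M[R]_d :=
  let P := Mplus M in
  emul (M a *m P) (P *m emul P D + emul P D *m P)
  - emul ((emul (M a) D) *m P + M a *m emul P D) (P *m P).

Definition Aprime (M : 'I_k -> 'M[R]_d) (D : 'M[R]_d)
  : {ffun 'I_k -> 'M[R]_d} * 'M[R]_(k, d) :=
  ([ffun a => La M a D], \matrix_(a, s) \sum_(s' < d) M a s s' * D s s').

Definition admissible (pi : 'I_k -> 'I_d -> R) (M : 'I_k -> 'M[R]_d) : Prop :=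
  (forall a s s', 0 <= M a s s') /\
  (forall a s, \sum_(s' < d) M a s s' = pi a s) /\
  (forall s s', 0 < Mplus M s s').

End Defs.

(* Main.v *)
Require Import Defs.
From HB Require Import structures.
From mathcomp Require Import all_boot all_order all_algebra.
From mathcomp Require Import reals.
From mathcomp Require Import ring lra.
Set Implicit Arguments. Unset Strict Implicit. Unset Printing Implicit Defensive.
Import Order.TTheory GRing.Theory Num.Theory.
Local Open Scope ring_scope.

Section Aux.
Variables (R : realType) (d k : nat).
Implicit Types (A B D E : 'M[R]_d).

Lemma emulDr A D E : emul A (D + E) = emul A D + emul A E.
Proof. by apply/matrixP=> i j; rewrite !mxE mulrDr. Qed.
Lemma emulZr A c D : emul A (c *: D) = c *: emul A D.
Proof. apply/matrixP=> i j; rewrite !mxE; ring. Qed.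
Lemma emulDl A D E : emul (D + E) A = emul D A + emul E A.
Proof. by apply/matrixP=> i j; rewrite !mxE mulrDl. Qed.
Lemma emulZl A c D : emul (c *: D) A = c *: emul D A.
Proof. apply/matrixP=> i j; rewrite !mxE; ring. Qed.
Lemma mulmxZl c A B : (c *: A) *m B = c *: (A *m B).
Proof. by rewrite scalemxAl. Qed.
Lemma mulmxZr c A B : A *m (c *: B) = c *: (A *m B).
Proof. by rewrite scalemxAr. Qed.

Lemma La_lin (M : 'I_k -> 'M[R]_d) a c D E :
  La M a (c *: D + E) = c *: La M a D + La M a E.
Proof.
rewrite /La !(emulDr, emulZr, emulDl, emulZl, mulmxDl, mulmxDr, mulmxZl, mulmxZr).
apply/matrixP=> i j; rewrite !mxE; ring.
Qed.

Definition gvec (M : 'I_k -> 'M[R]_d) (D : 'M[R]_d) : 'rV[R]_(k * (d * d) + k * d) :=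
  row_mx (mxvec (\matrix_(a < k, j < d * d) mxvec (La M a D) 0 j))
         (mxvec (\matrix_(a < k, s < d) \sum_(s' < d) M a s s' * D s s')).
Definition fvec M (x : 'rV[R]_(d * d)) := gvec M (vec_mx x).

Lemma fvec_lin M : linear (fvec M).
Proof.
move=> c u v; rewrite /fvec /gvec linearP /=.
rewrite scale_row_mx add_row_mx -!linearZ -!linearD /=; congr row_mx; congr mxvec;
  apply/matrixP=> i j; rewrite !mxE.
  by rewrite linearP La_lin linearP /= !mxE.
rewrite linearP mulr_sumr -big_split; apply: eq_bigr => s _ /=; rewrite !mxE; ring.
Qed.

Lemma gvec0 M D : gvec M D = 0 -> Aprime M D = (0, 0).
Proof.
move/eqP; rewrite /gvec row_mx_eq0 !mxvec_eq0 => /andP[/eqP h1 /eqP h2].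
rewrite /Aprime; congr pair; last exact: h2.
apply/ffunP=> a; rewrite !ffunE; apply/matrixP=> i j.
have := congr1 (fun A : 'M[R]_(k, d * d) => A a (mxvec_index i j)) h1.
rewrite [X in X = _ -> _]mxE [X in _ = X -> _]mxE mxvecE => ->.
by rewrite mxE.
Qed.

Lemma le_sum1 (I : finType) (F : I -> R) i : (forall j, 0 <= F j) -> F i <= \sum_j F j.
Proof. by move=> h; rewrite (bigD1 i) //= lerDl sumr_ge0. Qed.

Definition Bq (M : 'I_k -> 'M[R]_d) a D : 'M[R]_d :=
  let P := Mplus M in
  emul (emul (M a) D *m emul P D) (P *m P) - emul (M a *m P) (emul P D *m emul P D).

Definition cB (M : 'I_k -> 'M[R]_d) a s s' : R :=
  let P := Mplus M in
  (\sum_t `|M a s t * P t s'|) * `|(P *m P) s s'|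
  + `|(M a *m P) s s'| * \sum_t `|P s t * P t s'|.

Lemma prod_bound X Y D (del : R) : 0 <= del -> (forall s t, `|D s t| <= del) ->
  forall s s', `|(emul X D *m emul Y D) s s'| <= (\sum_t `|X s t * Y t s'|) * del ^+ 2.
Proof.
move=> d0 hD s s'; rewrite mxE mulr_suml; apply: le_trans (ler_norm_sum _ _ _) _.
apply: ler_sum => t _; rewrite !mxE.
have -> : X s t * D s t * (Y t s' * D t s') = (X s t * Y t s') * (D s t * D t s') by ring.
rewrite normrM ler_wpM2l // normrM expr2 ler_pM //.
Qed.

Lemma Bq_bound M a D (del : R) : 0 <= del -> (forall s t, `|D s t| <= del) ->
  forall s s', `|Bq M a D s s'| <= cB M a s s' * del ^+ 2.
Proof.
move=> d0 hD s s'.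
have -> : Bq M a D s s' = (emul (M a) D *m emul (Mplus M) D) s s' * (Mplus M *m Mplus M) s s'
   - (M a *m Mplus M) s s' * (emul (Mplus M) D *m emul (Mplus M) D) s s'.
  by rewrite /Bq !mxE.
rewrite /cB; apply: le_trans (ler_normB _ _) _.
rewrite !normrM.
have h1 := prod_bound (M a) (Mplus M) d0 hD s s'.
have h2 := prod_bound (Mplus M) (Mplus M) d0 hD s s'.
have e1 : `|(emul (M a) D *m emul (Mplus M) D) s s'| * `|(Mplus M *m Mplus M) s s'|
   <= (\sum_t `|M a s t * Mplus M t s'|) * del ^+ 2 * `|(Mplus M *m Mplus M) s s'|.
  by rewrite ler_wpM2r.
have e2 : `|(M a *m Mplus M) s s'| * `|(emul (Mplus M) D *m emul (Mplus M) D) s s'|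
   <= `|(M a *m Mplus M) s s'| * ((\sum_t `|Mplus M s t * Mplus M t s'|) * del ^+ 2).
  by rewrite ler_wpM2l.
apply: le_trans (lerD e1 e2) _; rewrite le_eqVlt; apply/orP; left; apply/eqP; ring.
Qed.

Lemma sq_pos (P : 'M[R]_d) : (forall s s', 0 < P s s') -> forall i j, 0 < (P *m P) i j.
Proof.
move=> hP i j; rewrite mxE (bigD1 i) //=.
have h1 : 0 < P i i * P i j by rewrite mulr_gt0.
have h2 : 0 <= \sum_(t | t != i) P i t * P t j.
  by apply: sumr_ge0 => t _; rewrite mulr_ge0 // ltW.
lra.
Qed.

Lemma key (pi : 'I_k -> 'I_d -> R) (M W : 'I_k -> 'M[R]_d) :
  admissible pi M -> admissible pi W ->
  (forall a, ediv (M a) (Mplus M) = ediv (W a) (Mplus W)) ->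
  (forall a, ediv (M a *m Mplus M) (Mplus M *m Mplus M)
                 = ediv (W a *m Mplus W) (Mplus W *m Mplus W)) ->
  let D := \matrix_(s, s') (Mplus W s s' / Mplus M s s' - 1) in
  [/\ (forall a, La M a D = Bq M a D), (forall a s, \sum_(s' < d) M a s s' * D s s' = 0)
    & (forall a, emul (M a) D = W a - M a)].
Proof.
move=> [hM0 [hMs hMp]] [hW0 [hWs hWp]] h1 h2 D.
have hW a s s' : W a s s' = M a s s' * (Mplus W s s' / Mplus M s s').
  have := congr1 (fun A : 'M[R]_d => A s s') (h1 a); rewrite !mxE => e.
  have hp := hMp s s'; have hq := hWp s s'.
  have -> : W a s s' = (W a s s' / Mplus W s s') * Mplus W s s'.
    by field; rewrite gt_eqF.
  rewrite -e; field; rewrite gt_eqF //.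
have hN a : emul (M a) D = W a - M a.
  apply/matrixP=> s s'; rewrite !mxE hW; have hp := hMp s s'; field; rewrite gt_eqF //.
have hQ : emul (Mplus M) D = Mplus W - Mplus M.
  apply/matrixP=> s s'; rewrite !mxE; have hp := hMp s s'; field; rewrite gt_eqF //.
split => //; last first.
  move=> a s; have -> : \sum_(s' < d) M a s s' * D s s' = \sum_(s' < d) (W a s s' - M a s s').
    by apply: eq_bigr => s' _; have := congr1 (fun A : 'M[R]_d => A s s') (hN a); rewrite !mxE.
  by rewrite sumrB hMs hWs subrr.
move=> a; rewrite /La /Bq hN hQ; apply/matrixP=> i j.
have := congr1 (fun A : 'M[R]_d => A i j) (h2 a); rewrite [LHS]mxE [RHS]mxE => /eqP.
have p1 := sq_pos hMp i j; have p2 := sq_pos hWp i j.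
rewrite eqr_div ?(gt_eqF p1) ?(gt_eqF p2) // => /eqP E.
have E' : (M a *m Mplus M) i j * (Mplus W *m Mplus W) i j - (W a *m Mplus W) i j * (Mplus M *m Mplus M) i j = 0.
  by rewrite E subrr.
rewrite !mulmxBl !mulmxBr.
apply/eqP; rewrite -subr_eq0 -E' !mxE; apply/eqP; ring.
Qed.

End Aux.
Theorem proposition3 (R : realType) (d k : nat) (hd : (0 < d)%N) (hk : (0 < k)%N)
  (pi : 'I_k -> 'I_d -> R)
  (hpi_nonneg : forall a s, 0 <= pi a s)
  (hpi_sum : forall s, \sum_(a < k) pi a s = 1)
  (M : 'I_k -> 'M[R]_d)
  (hM : admissible pi M)
  (hrank : forall D : 'M[R]_d, Aprime M D = (0, 0) -> D = 0) :
  exists eps : R, 0 < eps /\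
    forall W : 'I_k -> 'M[R]_d,
      admissible pi W ->
      (forall a s s', `|W a s s' - M a s s'| < eps) ->
      (forall a, ediv (M a) (Mplus M) = ediv (W a) (Mplus W)) ->
      (forall a, ediv (M a *m Mplus M) (Mplus M *m Mplus M)
                 = ediv (W a *m Mplus W) (Mplus W *m Mplus W)) ->
      forall a, W a = M a.
Proof.
have hMadm := hM.
case: hM => [hM0 [hMs hMp]].
pose fL : {linear 'rV[R]_(d * d) -> 'rV[R]_(k * (d * d) + k * d)} :=
  HB.pack (fvec M) (GRing.isLinear.Build _ _ _ _ (fvec M) (@fvec_lin R d k M)).
have hA x : x *m lin1_mx fL = fvec M x by rewrite mul_rV_lin1.
have rfA : row_free (lin1_mx fL).
  apply: inj_row_free => v; rewrite hA => /gvec0 /hrank hv.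
  by rewrite -(vec_mxK v) hv linear0.
case/row_freeP: rfA => B hB.
have hx x : x = fvec M x *m B by rewrite -hA -mulmxA hB mulmx1.
pose P := Mplus M.
pose CB := \sum_a \sum_s \sum_s' cB M a s s'.
pose SB := \sum_j \sum_i `|B i j|.
pose K := CB * SB.
pose Sinv := \sum_s \sum_s' (P s s')^-1.
have cB0 a s s' : 0 <= cB M a s s'.
  by rewrite /cB addr_ge0 // mulr_ge0 // sumr_ge0.
have CB0 : 0 <= CB by do 3! (apply: sumr_ge0 => ? _).
have SB0 : 0 <= SB by do 2! (apply: sumr_ge0 => ? _).
have K0 : 0 <= K by rewrite mulr_ge0.
have Sinv0 : 0 <= Sinv by do 2! (apply: sumr_ge0 => ? _); rewrite invr_ge0 ltW.
pose a0 := (d * d)%:R * k%:R * Sinv.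
have a00 : 0 <= a0 by rewrite mulr_ge0 // mulr_ge0.
pose eps := ((a0 + 1) * (K + 1) * 2)^-1.
have eps0 : 0 < eps by rewrite invr_gt0 !mulr_gt0 // ltr_wpDl.
exists eps; split => // W hW hclose h1 h2.
have [hLa hrow hN] := key hMadm hW h1 h2.
set D := \matrix_(s, s') _ in hLa hrow hN.
pose x := mxvec D.
pose del := \sum_j `|x 0 j|.
have del0 : 0 <= del by apply: sumr_ge0.
have hD s t : `|D s t| <= del.
  by rewrite -(mxvecE D); apply: (@le_sum1 _ _ (fun j => `|x 0 j|)).
have hfx i : `|fvec M x 0 i| <= CB * del ^+ 2.
  rewrite /fvec mxvecK /gvec.
  have -> : (\matrix_(a, s) \sum_(s' < d) M a s s' * D s s') = 0.
    by apply/matrixP => a s; rewrite !mxE hrow.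
  rewrite linear0 -(splitK i); case: (split i) => j /=.
    rewrite row_mxEl; case/mxvec_indexP: j => a jj; rewrite mxvecE mxE.
    case/mxvec_indexP: jj => s s'; rewrite mxvecE hLa.
    apply: le_trans (@Bq_bound _ _ _ M a D del del0 hD s s') _; rewrite ler_wpM2r ?exprn_ge0 //.
    apply: le_trans (@le_sum1 _ _ (fun a => \sum_s \sum_s' cB M a s s') a _) => //; last first.
      by move=> ?; do 2! (apply: sumr_ge0 => ? _).
    apply: le_trans (@le_sum1 _ _ (fun s => \sum_s' cB M a s s') s _) => //; last first.
      by move=> ?; apply: sumr_ge0 => ? _.
    exact: (@le_sum1 _ _ (fun s' => cB M a s s') s').
  by rewrite row_mxEr mxE normr0 mulr_ge0 // exprn_ge0.
have hdel : del <= K * del ^+ 2.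
  apply: (@le_trans _ _ (\sum_j \sum_i CB * del ^+ 2 * `|B i j|)).
    apply: ler_sum => j _; rewrite {1}(hx x) mxE.
    apply: le_trans (ler_norm_sum _ _ _) _; apply: ler_sum => i _.
    by rewrite normrM ler_wpM2r.
  rewrite le_eqVlt; apply/orP; left; apply/eqP.
  rewrite /K /SB [RHS]mulrAC [RHS]mulr_sumr; apply: eq_bigr => j _.
  rewrite [RHS]mulr_sumr; apply: eq_bigr => i _; ring.
have hDs s s' : `|D s s'| <= k%:R * eps * Sinv.
  have hp := hMp s s'.
  have -> : D s s' = (Mplus W s s' - P s s') / P s s'.
    by rewrite mxE; field; rewrite gt_eqF.
  have -> : Mplus W s s' - P s s' = \sum_a (W a s s' - M a s s').
    by rewrite /P /Mplus !summxE sumrB.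
  rewrite normrM normfV (gtr0_norm hp).
  have e1 : `|\sum_a (W a s s' - M a s s')| <= k%:R * eps.
    apply: le_trans (ler_norm_sum _ _ _) _.
    apply: (@le_trans _ _ (\sum_(a < k) eps)).
      by apply: ler_sum => a _; rewrite ltW.
    by rewrite sumr_const card_ord mulr_natl.
  have e2 : (P s s')^-1 <= Sinv.
    apply: le_trans (@le_sum1 _ _ (fun s' => (P s s')^-1) s' _) _.
      by move=> ?; rewrite invr_ge0 ltW.
    apply: (@le_sum1 _ _ (fun s => \sum_s' (P s s')^-1) s).
    by move=> ?; apply: sumr_ge0 => ? _; rewrite invr_ge0 ltW.
  have e3 : 0 <= k%:R * eps by rewrite mulr_ge0 // ltW.
  by apply: ler_pM => //; rewrite invr_ge0 ltW.
have hdelb : del <= a0 * eps.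
  apply: (@le_trans _ _ (\sum_(j < d * d) k%:R * eps * Sinv)).
    apply: ler_sum => j _; case/mxvec_indexP: j => s s'; rewrite /x mxvecE; exact: hDs.
  rewrite sumr_const card_ord -mulr_natl /a0 le_eqVlt; apply/orP; left; apply/eqP; ring.
have e1 : (a0 + 1) * (K + 1) * 2 * eps = 1.
  rewrite /eps mulfV // gt_eqF // !mulr_gt0 // ltr_wpDl //.
have t1 : K * del <= K * (a0 * eps) by rewrite ler_wpM2l.
have t2 : K * (a0 * eps) <= 1 / 2.
  have : K * (a0 * eps) <= (K + 1) * (a0 + 1) * eps.
    have : 0 <= (K + a0 + 1) * eps by apply: mulr_ge0; [rewrite !addr_ge0 | exact: ltW].
    move=> h; rewrite -subr_ge0; apply: le_trans h _; rewrite le_eqVlt; apply/orP; left; apply/eqP; ring.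
  move=> h; apply: le_trans h _; rewrite le_eqVlt; apply/orP; left; apply/eqP.
  have -> : (K + 1) * (a0 + 1) * eps = ((a0 + 1) * (K + 1) * 2 * eps) / 2 by field.
  by rewrite e1.
have t3 : K * del ^+ 2 <= 1 / 2 * del.
  rewrite expr2 mulrA ler_wpM2r //; exact: le_trans t1 t2.
have hz : del = 0 by lra.
have D0 : D = 0.
  apply/matrixP => s t; rewrite [RHS]mxE; apply/eqP; rewrite -normr_le0 -hz; exact: hD.
move=> a; apply/eqP; rewrite -subr_eq0 -hN D0; apply/eqP/matrixP => s t; by rewrite !mxE mulr0.
Qed.
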